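(* Suppose that $\Gamma(t)$ is finite for every $t\in S$. Let $D\subset S$ and let $A\subset\Omega$ be $D$-determined. Then $F_A\cap\mathcal H_\pi=F^D_A\cap\mathcal H_\pi$.
   Context: Let $\mathcal H$ be a complex Hilbert space. A projection is a bounded self-adjoint idempotent operator; $\wedge_\alpha p_\alpha$ is the projection onto the intersection of the ranges of the $p_\alpha$. Sums of countably many operators are understood strongly. Let $S$ be an arbitrary set; for each $t\in S$ let $\Gamma(t)$ be a countable set and for $a\in\Gamma(t)$ let $p^t_a$ be a projection on $\mathcal H$ with $\sum_{a\in\Gamma(t)}p^t_a=I$. Let $\pi=\{p^t_a\}$ and $p^{t_1,\dots,t_k}_{a_1,\dots,a_k}=\wedge_{i=1}^kp^{t_i}_{a_i}$. $\pi$ commutes on $\phi$ if $W\phi=V\phi$ whenever $W,V$ are finite products of elements of $\pi$ with the same factors (with multiplicity) in possibly different orders; $\mathcal H_\pi$ is the set of such $\phi$. Let $\Omega=\prod_{t\in S}\Gamma(t)$. For $A\subset\Omega$ and $D\subset S$, $F^D_A=\{\phi\in\mathcal H:$ for every $\omega\in A$ there are $t_1,\dots,t_k\in D$ with $p^{t_1,\dots,t_k}_{\omega_{t_1},\dots,\omega_{t_k}}\phi=0\}$, and $F_A=F^S_A$. A set $A\subset\Omega$ is $D$-determined if any two elements of $\Omega$ with identical restrictions to $D$ either both belong to $A$ or both do not. *)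

(* Defs.v *)
From HB Require Import structures.
From mathcomp Require Import all_boot all_order all_algebra.
From mathcomp Require Import complex.
From mathcomp Require Import all_classical all_reals topology normedtype.
From Stdlib Require Import Permutation.
Set Implicit Arguments. Unset Strict Implicit. Unset Printing Implicit Defensive.
Import Order.TTheory GRing.Theory Num.Theory.
Import numFieldNormedType.Exports.
Local Open Scope classical_set_scope.
Local Open Scope ring_scope.
Local Open Scope complex_scope.

Definition is_inner_product (R : realType) (H : completeNormedModType R[i])
  (ip : H -> H -> R[i]) : Prop :=
  [/\ (forall (a : R[i]) (x y z : H), ip (a *: x + y) z = a * ip x z + ip y z),
      (forall x y : H, ip y x = Num.conj (ip x y)) &
      (forall x : H, ip x x = `|x| ^+ 2)].

Definition bounded_op (R : realType) (H : completeNormedModType R[i])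
  (T : H -> H) : Prop :=
  (forall (a : R[i]) (x y : H), T (a *: x + y) = a *: T x + T y) /\ continuous T.

Definition is_projection (R : realType) (H : completeNormedModType R[i])
  (ip : H -> H -> R[i]) (p : H -> H) : Prop :=
  [/\ bounded_op p, (forall x y, ip (p x) y = ip x (p y)) &
      (forall x, p (p x) = p x)].

Definition op_range (H : Type) (p : H -> H) : set H := [set y | exists x, y = p x].

(* [q] is the meet of the projections in [ps]: the projection onto the
   intersection of their ranges (the empty meet is the identity). *)
Definition is_meet (R : realType) (H : completeNormedModType R[i])
  (ip : H -> H -> R[i]) (ps : seq (H -> H)) (q : H -> H) : Prop :=
  is_projection ip q /\
  op_range q = [set y | forall p, List.In p ps -> op_range p y].

Definition op_prod (H : Type) (ws : seq (H -> H)) (x : H) : H :=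
  foldr (fun f y => f y) x ws.

(* H_pi : vectors on which the family pi = {p t a} commutes *)
Definition commuting_set (R : realType) (H : completeNormedModType R[i])
  (S : Type) (G : S -> finType) (p : forall t, G t -> H -> H) : set H :=
  [set phi | forall l1 l2 : seq {t : S & G t},
     Permutation (map (fun i => p (projT1 i) (projT2 i)) l1)
                 (map (fun i => p (projT1 i) (projT2 i)) l2) ->
     op_prod (map (fun i => p (projT1 i) (projT2 i)) l1) phi =
     op_prod (map (fun i => p (projT1 i) (projT2 i)) l2) phi].

Definition F_set (R : realType) (H : completeNormedModType R[i])
  (ip : H -> H -> R[i]) (S : Type) (G : S -> finType)
  (p : forall t, G t -> H -> H) (D : set S) (A : set (forall t, G t)) : set H :=
  [set phi | forall omega, A omega ->
     exists ts : seq S, (forall t, List.In t ts -> D t) /\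
       exists q, is_meet ip (map (fun t => p t (omega t)) ts) q /\ q phi = 0].

Definition determined (S : Type) (G : S -> Type) (D : set S)
  (A : set (forall t, G t)) : Prop :=
  forall omega omega' : forall t, G t,
    (forall t, D t -> omega t = omega' t) -> (A omega <-> A omega').

(* Main.v *)
Require Import Defs.
From HB Require Import structures.
From mathcomp Require Import all_boot all_order all_algebra.
From mathcomp Require Import complex.
From mathcomp Require Import all_classical all_reals topology normedtype.
From Stdlib Require Import Permutation Eqdep.
From mathcomp Require Import ring lra.
Import Order.TTheory GRing.Theory Num.Theory.
Set Implicit Arguments. Unset Strict Implicit. Unset Printing Implicit Defensive.
Local Open Scope classical_set_scope.
Local Open Scope ring_scope.
Import numFieldNormedType.Exports.
Local Notation "x %:C" := (real_complex _ x) (at level 1, format "x %:C").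


Lemma ipD (R : realType) (H : completeNormedModType R[i]) (ip : H -> H -> R[i])
  (Hip : is_inner_product ip) x y z : ip (x + y) z = ip x z + ip y z.
Proof. case: Hip => h _ _; by have := h 1 x y z; rewrite scale1r mul1r. Qed.

Lemma ip0 (R : realType) (H : completeNormedModType R[i]) (ip : H -> H -> R[i])
  (Hip : is_inner_product ip) z : ip 0 z = 0.
Proof.
have := ipD Hip 0 0 z; rewrite addr0 => /(congr1 (fun v => v - ip 0 z)).
by rewrite subrr addrK.
Qed.

Lemma ipZ (R : realType) (H : completeNormedModType R[i]) (ip : H -> H -> R[i])
  (Hip : is_inner_product ip) a x z : ip (a *: x) z = a * ip x z.
Proof. have := ip0 Hip z; case: Hip => h _ _ h0; by have := h a x 0 z; rewrite addr0 h0 addr0. Qed.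

Lemma ipN (R : realType) (H : completeNormedModType R[i]) (ip : H -> H -> R[i])
  (Hip : is_inner_product ip) x z : ip (- x) z = - ip x z.
Proof. by rewrite -scaleN1r ipZ // mulN1r. Qed.

Lemma ipB (R : realType) (H : completeNormedModType R[i]) (ip : H -> H -> R[i])
  (Hip : is_inner_product ip) x y z : ip (x - y) z = ip x z - ip y z.
Proof. by rewrite ipD // ipN. Qed.

Lemma ipC (R : realType) (H : completeNormedModType R[i]) (ip : H -> H -> R[i])
  (Hip : is_inner_product ip) x y : ip y x = Num.conj (ip x y).
Proof. by case: Hip. Qed.

Lemma ipDr (R : realType) (H : completeNormedModType R[i]) (ip : H -> H -> R[i])
  (Hip : is_inner_product ip) x y z : ip z (x + y) = ip z x + ip z y.
Proof. by rewrite (ipC Hip (x + y)) ipD // rmorphD (ipC Hip x z) (ipC Hip y z). Qed.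

Lemma ipZr (R : realType) (H : completeNormedModType R[i]) (ip : H -> H -> R[i])
  (Hip : is_inner_product ip) a x z : ip z (a *: x) = Num.conj a * ip z x.
Proof. by rewrite (ipC Hip (a *: x)) ipZ // rmorphM (ipC Hip x z). Qed.

Lemma ip0r (R : realType) (H : completeNormedModType R[i]) (ip : H -> H -> R[i])
  (Hip : is_inner_product ip) z : ip z 0 = 0.
Proof. by rewrite ipC // ip0 // rmorph0. Qed.

Lemma ipBr (R : realType) (H : completeNormedModType R[i]) (ip : H -> H -> R[i])
  (Hip : is_inner_product ip) x y z : ip z (x - y) = ip z x - ip z y.
Proof. by rewrite ipDr // -scaleN1r ipZr // rmorphN1 mulN1r. Qed.

Lemma ipNr (R : realType) (H : completeNormedModType R[i]) (ip : H -> H -> R[i])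
  (Hip : is_inner_product ip) x z : ip z (- x) = - ip z x.
Proof. by rewrite -scaleN1r ipZr // rmorphN1 mulN1r. Qed.

Lemma ipxx (R : realType) (H : completeNormedModType R[i]) (ip : H -> H -> R[i])
  (Hip : is_inner_product ip) x : ip x x = `|x| ^+ 2.
Proof. by case: Hip. Qed.

Lemma ipxx0 (R : realType) (H : completeNormedModType R[i]) (ip : H -> H -> R[i])
  (Hip : is_inner_product ip) x : ip x x = 0 -> x = 0.
Proof.
rewrite ipxx // => /eqP; rewrite expf_eq0 /= normr_eq0 => /eqP //.
Qed.

Definition rn (R : realType) (H : completeNormedModType R[i]) (x : H) : R := complex.Re `|x|.

Lemma rnE (R : realType) (H : completeNormedModType R[i]) (x : H) : `|x| = (rn x)%:C.
Proof.
rewrite /rn; have h := normr_ge0 x.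
by rewrite [LHS]complexE (ger0_Im h) mulr0 addr0.
Qed.

Lemma rn_ge0 (R : realType) (H : completeNormedModType R[i]) (x : H) : 0 <= rn x.
Proof. by rewrite -lecR -rnE normr_ge0. Qed.

Lemma ipxxR (R : realType) (H : completeNormedModType R[i]) (ip : H -> H -> R[i])
  (Hip : is_inner_product ip) x : ip x x = (rn x ^+ 2)%:C.
Proof. by rewrite ipxx // rnE rmorphXn. Qed.

Lemma rnD (R : realType) (H : completeNormedModType R[i]) (x y : H) : rn (x + y) <= rn x + rn y.
Proof. have := ler_normD x y. rewrite lecE => /andP[_]. rewrite /rn raddfD. by []. Qed.

Lemma rnB (R : realType) (H : completeNormedModType R[i]) (x y : H) : rn (x - y) = rn (y - x).
Proof. by rewrite /rn distrC. Qed.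

Lemma rn2Re (R : realType) (H : completeNormedModType R[i]) (ip : H -> H -> R[i])
  (Hip : is_inner_product ip) (x : H) : rn x ^+ 2 = complex.Re (ip x x).
Proof. by rewrite ipxxR. Qed.

Lemma parallelogram (R : realType) (H : completeNormedModType R[i]) (ip : H -> H -> R[i])
  (Hip : is_inner_product ip) (a b : H) :
  rn (a + b) ^+ 2 + rn (a - b) ^+ 2 = 2 * rn a ^+ 2 + 2 * rn b ^+ 2.
Proof.
rewrite !(rn2Re Hip) !mulr_natl -!raddfMn -!raddfD; congr complex.Re.
rewrite !ipD // !ipN // !ipDr // !ipNr //.
ring.
Qed.

Lemma rnZ2 (R : realType) (H : completeNormedModType R[i]) (ip : H -> H -> R[i])
  (Hip : is_inner_product ip) (v : H) : rn ((2:R[i]) *: v) ^+ 2 = 4 * rn v ^+ 2.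
Proof.
rewrite !(rn2Re Hip) mulr_natl -!raddfMn; congr complex.Re.
rewrite ipZ // ipZr //.
rewrite mulrA -[ip v v *+ 4]mulr_natl; congr (_ * _); apply/eqP; rewrite eq_complex /=.
by apply/andP; split; apply/eqP; ring.
Qed.

Lemma arch (R : realType) (e : R) : 0 < e -> exists N : nat, N.+1%:R^-1 < e.
Proof.
move=> e0; have h : e^-1 < (Num.bound e^-1)%:R by apply: archi_boundP; rewrite invr_ge0 ltW.
exists (Num.bound e^-1); rewrite -[e in _ < e]invrK ltf_pV2 ?posrE ?invr_gt0 ?ltr0n //.
by apply: (lt_trans h); rewrite ltr_nat.
Qed.

Lemma invS_le (R : realType) (N n : nat) : (N <= n)%N -> n.+1%:R^-1 <= N.+1%:R^-1 :> R.
Proof. by move=> h; rewrite lef_pV2 ?posrE ?ltr0n // ler_nat. Qed.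

Lemma invS_gt0 (R : realType) (n : nat) : 0 < n.+1%:R^-1 :> R.
Proof. by rewrite invr_gt0 ltr0n. Qed.

Lemma invS_le1 (R : realType) (n : nat) : n.+1%:R^-1 <= 1 :> R.
Proof. by rewrite invf_le1 ?ltr0n // ler1n. Qed.

Lemma rcD (R : realType) (a b : R) : (a + b)%:C = a%:C + b%:C. Proof. exact: rmorphD. Qed.
Lemma rcB (R : realType) (a b : R) : (a - b)%:C = a%:C - b%:C. Proof. exact: rmorphB. Qed.
Lemma rcM (R : realType) (a b : R) : (a * b)%:C = a%:C * b%:C. Proof. exact: rmorphM. Qed.
Lemma rcX (R : realType) (a : R) : (a ^+ 2)%:C = a%:C ^+ 2. Proof. exact: rmorphXn. Qed.
Lemma rc2 (R : realType) : (2 : R)%:C = 2. Proof. exact: rmorph_nat. Qed.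
Lemma conjM (R : realType) (a b : R[i]) : Num.conj (a * b) = Num.conj a * Num.conj b.
Proof. exact: rmorphM. Qed.
Lemma conjR (R : realType) (a : R) : Num.conj (a%:C) = a%:C.
Proof. by apply/eqP; rewrite eq_complex /= oppr0 !eqxx. Qed.
Lemma mulJ_real (R : realType) (w : R[i]) : w * Num.conj w = (complex.Re (w * Num.conj w))%:C.
Proof.
have h : 0 <= w * Num.conj w by exact: mulcJ_ge0.
by rewrite [LHS]complexE (ger0_Im h) mulr0 addr0.
Qed.
Lemma mulJ_ge0 (R : realType) (w : R[i]) : 0 <= complex.Re (w * Num.conj w).
Proof. by rewrite -lecR -mulJ_real; exact: mulcJ_ge0. Qed.

Lemma num1 (R : realType) (s alpha beta t : R) : 0 <= beta -> 0 <= alpha -> 0 < t ->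
  t * beta = 1 - t -> s <= s - 2 * t * alpha + t ^+ 2 * alpha * beta -> alpha = 0.
Proof.
move=> b0 a0 t0 tb h.
have : 0 <= t * alpha * (- 1 - t) by nra.
nra.
Qed.

Lemma orth_of_min (R : realType) (H : completeNormedModType R[i]) (ip : H -> H -> R[i])
  (Hip : is_inner_product ip) (M : set H)
  (Mlin : forall a x y, M x -> M y -> M (a *: x + y)) (x m0 : H) :
  M m0 -> (forall m, M m -> rn (x - m0) ^+ 2 <= rn (x - m) ^+ 2) ->
  forall y, M y -> ip (x - m0) y = 0.
Proof.
move=> Mm0 hmin y My.
set z := x - m0; set w := ip z y; set beta := rn y ^+ 2.
set t := (beta + 1)^-1; set c := t%:C * w.
set alpha := complex.Re (w * Num.conj w).
have hle := hmin _ (Mlin c y m0 My Mm0).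
have ez : x - (c *: y + m0) = z - c *: y by rewrite /z opprD addrA addrAC.
rewrite ez in hle.
have {}hle : rn z ^+ 2 <= rn (z - c *: y) ^+ 2 by [].
have wE : ip z y = w by [].
have hb : beta%:C = ip y y by rewrite /beta (ipxxR Hip).
have ha : alpha%:C = w * Num.conj w by rewrite /alpha -mulJ_real.
have b0 : 0 <= beta by rewrite /beta sqr_ge0.
have a0 : 0 <= alpha by apply: mulJ_ge0.
have bp : 0 < beta + 1 by apply: (lt_le_trans ltr01); rewrite lerDr.
have tb : t * beta = 1 - t by rewrite /t; field; exact: lt0r_neq0.
have t0 : 0 < t by rewrite /t invr_gt0.
have cE : c = t%:C * w by [].
clearbody alpha c t beta w z.
have eq : rn (z - c *: y) ^+ 2 = rn z ^+ 2 - 2 * t * alpha + t ^+ 2 * alpha * beta.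
  apply: complexI; rewrite rcD rcB -!(ipxxR Hip) !rcM rc2 hb ha.
  rewrite ipB // !ipBr // !ipZ // !ipZr // cE conjM conjR (ipC Hip z y) wE.
  ring.
have aeq : alpha = 0 by rewrite eq in hle; exact: (num1 b0 a0 t0 tb hle).
have : w * Num.conj w = 0 by rewrite -ha aeq.
move/eqP; rewrite mulf_eq0 => /orP[/eqP //|].
by rewrite conjC_eq0 => /eqP.
Qed.

Lemma num_cau (R : realType) (a b c d q en ek : R) :
  4 * c + q = 2 * a + 2 * b -> a < d + en -> b < d + ek -> d <= c -> q <= 2 * en + 2 * ek.
Proof. move=> *; lra. Qed.

Lemma num_lim (R : realType) (s a b d t dl e : R) :
  0 <= s -> 0 <= a -> 0 <= b -> s <= a + b -> b < dl -> dl <= 1 -> dl * (4 * d + 10) <= e ->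
  a ^+ 2 < d + t -> t <= 1 -> t < e / 2 -> 0 <= d -> s ^+ 2 <= d + e.
Proof.
move=> s0 a0 b0 sab bdl dl1 dle ha t1 te d0.
have h1 : s ^+ 2 <= (a + b) ^+ 2 by nra.
have h2 : 2 * a <= d + 2 by nra.
have h3 : b * (2 * a + b) <= dl * (d + 3) by nra.
have h4 : dl * (d + 3) <= e / 2 by nra.
nra.
Qed.

Lemma num_c2 (R : realType) (r e iN iN' : R) :
  0 <= r -> r ^+ 2 <= 2 * iN + 2 * iN' -> iN' <= iN -> iN < e ^+ 2 / 4 -> 0 < e -> r < e.
Proof. move=> *; nra. Qed.

Lemma min_exists (R : realType) (H : completeNormedModType R[i]) (ip : H -> H -> R[i])
  (Hip : is_inner_product ip) (M : set H) (M0 : M 0)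
  (Mlin : forall a x y, M x -> M y -> M (a *: x + y))
  (Mcl : forall (u : nat -> H) l, (forall n, M (u n)) -> u @ \oo --> l -> M l) (x : H) :
  exists m0, M m0 /\ forall m, M m -> rn (x - m0) ^+ 2 <= rn (x - m) ^+ 2.
Proof.
pose V := [set r : R | exists2 m, M m & r = rn (x - m) ^+ 2].
have hlb : has_lbound V by exists 0 => r [m _ ->]; exact: sqr_ge0.
have hne : V !=set0 by exists (rn (x - 0) ^+ 2), 0.
have hinf : has_inf V by split.
pose d := inf V.
have dle : forall m, M m -> d <= rn (x - m) ^+ 2.
  by move=> m Mm; apply: ge_inf => //; exists m.
have d0 : 0 <= d by apply: lb_le_inf => // r [m _ ->]; exact: sqr_ge0.
have : forall n : nat, exists m, M m /\ rn (x - m) ^+ 2 < d + n.+1%:R^-1.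
  move=> n; have [r [m Mm ->] hr] := inf_adherent (invS_gt0 R n) hinf.
  by exists m.
move/choice => [u hu].
have hcau : forall n k, rn (u n - u k) ^+ 2 <= 2 * n.+1%:R^-1 + 2 * k.+1%:R^-1.
  move=> n k.
  pose w := (2^-1 : R[i]) *: u n + ((2^-1 : R[i]) *: u k + 0).
  have Mw : M w := Mlin _ _ _ (hu n).1 (Mlin _ _ _ (hu k).1 M0).
  have P := parallelogram Hip (x - u n) (x - u k).
  have e1 : x - u n + (x - u k) = (2 : R[i]) *: (x - w).
    rewrite /w addr0 -scalerDr scalerBr scalerA mulfV ?scale1r; last first.
      by rewrite pnatr_eq0.
    by rewrite scaler_nat mulr2n opprD addrACA.
  have e2 : x - u n - (x - u k) = u k - u n.
    by rewrite opprB addrC addrA subrK.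
  rewrite e1 e2 (rnZ2 Hip) in P.
  rewrite rnB.
  exact: (num_cau P (hu n).2 (hu k).2 (dle _ Mw)).
have hcvg : cvg (u @ \oo).
  apply/cauchy_cvgP/cauchyP => eps eps0.
  have eE : eps = (complex.Re eps)%:C.
    by rewrite [LHS]complexE (ger0_Im (ltW eps0)) mulr0 addr0.
  have e0 : 0 < complex.Re eps by rewrite -ltcR -eE.
  have [N hN] : exists N : nat, N.+1%:R^-1 < complex.Re eps ^+ 2 / 4.
    by apply: arch; rewrite divr_gt0 // exprn_gt0.
  exists (u N); exists N => // n /= hn.
  rewrite -ball_normE /ball_ /= rnE eE ltcR.
  apply: (num_c2 (rn_ge0 _) (hcau N n) (invS_le R hn)) => //.
have hu0 : u @ \oo --> limn u := hcvg.
set m0 := limn u in hu0 *.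
have Mm0 : M m0 := Mcl u m0 (fun n => (hu n).1) hu0.
exists m0; split => //.
suff hmin : rn (x - m0) ^+ 2 <= d by move=> m Mm; apply: le_trans hmin (dle m Mm).
apply/ler_addgt0Pr => e e0.
have k0 : 0 < 4 * d + 10 by apply: (lt_le_trans (_ : 0 < 10)); rewrite ?ltr0n // lerDr mulr_ge0.
pose dl := Num.min 1 (e / (4 * d + 10)).
have dl0 : 0 < dl by rewrite lt_min ltr01 divr_gt0.
have dl1 : dl <= 1 by rewrite ge_min lexx.
have dle' : dl * (4 * d + 10) <= e.
  by rewrite -ler_pdivlMr // ge_min lexx orbT.
have [N1 _ hN1] : \forall n \near \oo, `|m0 - u n| < dl%:C.
  have := (cvgrPdist_lt _ _).1 hu0 (dl%:C); rewrite ltcR => /(_ _ dl0). by [].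
have [N2 hN2] : exists N : nat, N.+1%:R^-1 < e / 2 by apply: arch; rewrite divr_gt0.
pose n := maxn N1 N2.
have hb : rn (u n - m0) < dl.
  rewrite rnB -ltcR -rnE; apply: hN1 => /=; exact: leq_maxl.
have ht : n.+1%:R^-1 <= N2.+1%:R^-1 :> R by apply: invS_le; exact: leq_maxr.
apply: (num_lim (rn_ge0 _) (rn_ge0 (x - u n)) (rn_ge0 (u n - m0)) _ hb dl1 dle' (hu n).2 (invS_le1 _ _) _ d0).
  by have := rnD (x - u n) (u n - m0); rewrite addrA subrK.
exact: le_lt_trans ht hN2.
Qed.

Lemma proj_lin (R : realType) (H : completeNormedModType R[i]) (ip : H -> H -> R[i])
  (f : H -> H) : is_projection ip f -> forall a x y, f (a *: x + y) = a *: f x + f y.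
Proof. by case=> [[]]. Qed.

Lemma proj0 (R : realType) (H : completeNormedModType R[i]) (ip : H -> H -> R[i])
  (f : H -> H) : is_projection ip f -> f 0 = 0.
Proof.
move=> /proj_lin h; have := h (-1) 0 0.
by rewrite scaler0 addr0 scaleN1r addNr.
Qed.

Lemma proj_cont (R : realType) (H : completeNormedModType R[i]) (ip : H -> H -> R[i])
  (f : H -> H) : is_projection ip f -> continuous f.
Proof. by case=> [[]]. Qed.

Lemma proj_idem (R : realType) (H : completeNormedModType R[i]) (ip : H -> H -> R[i])
  (f : H -> H) : is_projection ip f -> forall x, f (f x) = f x.
Proof. by case. Qed.

Lemma proj_sa (R : realType) (H : completeNormedModType R[i]) (ip : H -> H -> R[i])
  (f : H -> H) : is_projection ip f -> forall x y, ip (f x) y = ip x (f y).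
Proof. by case. Qed.

Lemma range_proj (R : realType) (H : completeNormedModType R[i]) (ip : H -> H -> R[i])
  (f : H -> H) : is_projection ip f -> forall y, op_range f y <-> f y = y.
Proof.
move=> hf y; split; first by case=> z ->; rewrite (proj_idem hf).
by move=> h; exists y.
Qed.

Lemma closed_fix (R : realType) (H : completeNormedModType R[i]) (ip : H -> H -> R[i])
  (f : H -> H) : is_projection ip f ->
  forall (u : nat -> H) l, (forall n, f (u n) = u n) -> u @ \oo --> l -> f l = l.
Proof.
move=> hf u l hu hl.
have h1 : (f \o u) @ \oo --> f l.
  by apply: continuous_cvg => //; apply: (proj_cont hf).
have e : f \o u = u by apply: funext => n /=; exact: hu.
rewrite e in h1.
by rewrite -(cvg_lim (@norm_hausdorff _ H) h1) (cvg_lim (@norm_hausdorff _ H) hl).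
Qed.

Lemma subsub (V : zmodType) (x m q : V) : x - m - (x - q) = q - m.
Proof. by rewrite opprB addrC addrA subrK. Qed.

Lemma vecid (R : realType) (H : completeNormedModType R[i]) (a : R[i]) (x y qx qy : H) :
  a *: x + y - (a *: qx + qy) = a *: (x - qx) + (y - qy).
Proof. by rewrite scalerBr opprD addrACA. Qed.

Lemma lin_cont (R : realType) (H : completeNormedModType R[i]) (q : H -> H)
  (qB : forall x y, q (x - y) = q x - q y) (qle : forall v, `|q v| <= `|v|) : continuous q.
Proof.
move=> x0; apply/cvgrPdist_lt => eps eps0.
near=> t.
rewrite -qB; apply: le_lt_trans (qle _) _.
near: t.
exact: ((@cvgrPdist_lt _ _ _ (nbhs x0) _ (fun t => t) x0).1 cvg_id eps eps0).
Unshelve. all: by end_near.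
Qed.

Lemma meet_exists (R : realType) (H : completeNormedModType R[i]) (ip : H -> H -> R[i])
  (Hip : is_inner_product ip) (ps : seq (H -> H))
  (Hps : forall f, List.In f ps -> is_projection ip f) : exists q, is_meet ip ps q.
Proof.
pose M := [set y : H | forall f, List.In f ps -> f y = y].
have M0 : M 0 by move=> f /Hps hf; exact: (proj0 hf).
have Mlin : forall a x y, M x -> M y -> M (a *: x + y).
  by move=> a x y Mx My f hf; rewrite (proj_lin (Hps f hf)) (Mx f hf) (My f hf).
have Mcl : forall (u : nat -> H) l, (forall n, M (u n)) -> u @ \oo --> l -> M l.
  by move=> u l hu hl f hf; exact: (closed_fix (Hps f hf) (fun n => hu n f hf) hl).
have : forall x, exists m, M m /\ forall y, M y -> ip (x - m) y = 0.
  move=> x; have [m0 [Mm0 hmin]] := min_exists Hip M0 Mlin Mcl x.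
  by exists m0; split => //; exact: (orth_of_min Hip Mlin Mm0 hmin).
move/choice => [q hq].
have uniq : forall x m, M m -> (forall y, M y -> ip (x - m) y = 0) -> q x = m.
  move=> x m Mm hm; apply/eqP; rewrite -subr_eq0; apply/eqP.
  have Md : M (q x - m) by rewrite -scaleN1r addrC; apply: Mlin => //; exact: (hq x).1.
  apply: (ipxx0 Hip).
  by rewrite -{1}(subsub x m (q x)) ipB // (hm _ Md) ((hq x).2 _ Md) subr0.
have Mq x : M (q x) := (hq x).1.
have oq x y : M y -> ip (x - q x) y = 0 := (hq x).2 y.
have oq' x y : M y -> ip y (x - q x) = 0.
  by move=> My; rewrite (ipC Hip) oq // rmorph0.
have qlin : forall a x y, q (a *: x + y) = a *: q x + q y.
  move=> a x y; apply: uniq; first by apply: Mlin.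
  move=> w Mw; rewrite vecid ipD // ipZ // !oq //.
  by rewrite mulr0 addr0.
have q0 : q 0 = 0 by apply: uniq => // w _; rewrite subr0 ip0.
have qN : forall y, q (- y) = - q y.
  by move=> y; have := qlin (-1) y 0; rewrite addr0 q0 addr0 !scaleN1r.
have qB : forall x y, q (x - y) = q x - q y.
  by move=> x y; have := qlin 1 x (- y); rewrite !scale1r qN.
have qsa : forall x y, ip (q x) y = ip x (q y).
  move=> x y.
  rewrite -{1}(subrK (q y) y) ipDr // oq' // add0r.
  by rewrite -[in RHS](subrK (q x) x) ipD // oq // add0r.
have qidem : forall x, q (q x) = q x.
  by move=> x; apply: uniq => // w _; rewrite subrr ip0.
have pyth : forall v, rn v ^+ 2 = rn (q v) ^+ 2 + rn (v - q v) ^+ 2.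
  move=> v; apply: complexI; rewrite rcD -!(ipxxR Hip).
  rewrite -{1 2}(subrK (q v) v) (ipD Hip (v - q v)) (ipDr Hip (v - q v)) (ipDr Hip (v - q v) (q v) (q v)) (oq v (q v) (Mq v)) (oq' v (q v) (Mq v)).
  by rewrite addr0 add0r addrC.
have qle : forall v, `|q v| <= `|v|.
  move=> v; rewrite !rnE lecR.
  have := pyth v; have := rn_ge0 (q v); have := rn_ge0 v; have := rn_ge0 (v - q v).
  move=> *; nra.
have qcont : continuous q := lin_cont qB qle.
exists q; split.
  by split => //; split.
apply/seteqP; split => y.
  case=> z -> p hp; apply/(range_proj (Hps p hp)); exact: Mq.
move=> hy; exists y; apply/esym; apply: uniq.
  by move=> p hp; apply/(range_proj (Hps p hp)); exact: hy.
by move=> w _; rewrite subrr ip0.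
Qed.

Lemma catE (T : Type) (l1 l2 : seq T) : l1 ++ l2 = (l1 ++ l2)%list.
Proof. by elim: l1 => //= x l ->. Qed.

Lemma perm_map' (A B : Type) (f : A -> B) (l1 l2 : seq A) :
  Permutation l1 l2 -> Permutation (map f l1) (map f l2).
Proof.
elim=> //=.
- by move=> x l l' _ h; apply: perm_skip.
- by move=> x y l; apply: perm_swap.
- by move=> l l' l'' _ h1 _ h2; apply: perm_trans h1 h2.
Qed.

Lemma in_split' (T : Type) (x : T) (l : seq T) :
  List.In x l -> exists l1 l2, l = l1 ++ x :: l2.
Proof.
elim: l => //= y l IH [->|/IH [l1 [l2 ->]]]; first by exists [::], l.
by exists (y :: l1), l2.
Qed.

Lemma in_map' (A B : Type) (f : A -> B) (l : seq A) (y : B) :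
  List.In y (map f l) -> exists x, y = f x /\ List.In x l.
Proof.
elim: l => //= x l IH [<-|/IH [z [-> hz]]]; first by exists x; split => //; left.
by exists z; split => //; right.
Qed.

Lemma in_map2 (A B : Type) (f : A -> B) (l : seq A) (x : A) :
  List.In x l -> List.In (f x) (map f l).
Proof. by elim: l => //= y l IH [->|/IH h]; [left|right]. Qed.

Definition opE (S : Type) (G : S -> finType) (X : Type) (p : forall t, G t -> X -> X)
  (e : {t : S & G t}) : X -> X := p (projT1 e) (projT2 e).

Definition Pl (S : Type) (G : S -> finType) (X : Type) (p : forall t, G t -> X -> X)
  (l : seq {t : S & G t}) (x : X) : X := op_prod (map (opE p) l) x.

Lemma Pl_cons (S : Type) (G : S -> finType) (X : Type) (p : forall t, G t -> X -> X) e l x :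
  Pl p (e :: l) x = opE p e (Pl p l x).
Proof. by []. Qed.

Lemma Pl_cat (S : Type) (G : S -> finType) (X : Type) (p : forall t, G t -> X -> X) l1 l2 x :
  Pl p (l1 ++ l2) x = Pl p l1 (Pl p l2 x).
Proof. by rewrite /Pl map_cat /op_prod foldr_cat. Qed.

Lemma Pperm (R : realType) (H : completeNormedModType R[i])
  (S : Type) (G : S -> finType) (p : forall t, G t -> H -> H) (phi : H) l1 l2 :
  commuting_set p phi -> Permutation l1 l2 -> Pl p l1 phi = Pl p l2 phi.
Proof. by move=> hc hp; apply: hc; apply: perm_map'. Qed.

Lemma Pdup (R : realType) (H : completeNormedModType R[i]) (ip : H -> H -> R[i])
  (S : Type) (G : S -> finType) (p : forall t, G t -> H -> H)
  (Hproj : forall t a, is_projection ip (p t a)) (phi : H) e l :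
  commuting_set p phi -> List.In e l -> Pl p (e :: l) phi = Pl p l phi.
Proof.
move=> hc hin; have [l1 [l2 El]] := in_split' hin; rewrite El.
rewrite (Pperm hc (_ : Permutation _ (l1 ++ e :: e :: l2))); last first.
  by rewrite !catE; apply: Permutation_middle.
rewrite !Pl_cat !Pl_cons /opE (proj_idem (Hproj _ _)) //.
Qed.

Lemma Psub (R : realType) (H : completeNormedModType R[i]) (ip : H -> H -> R[i])
  (S : Type) (G : S -> finType) (p : forall t, G t -> H -> H)
  (Hproj : forall t a, is_projection ip (p t a)) (phi : H) l l' :
  commuting_set p phi -> (forall e, List.In e l -> List.In e l') ->
  Pl p (l ++ l') phi = Pl p l' phi.
Proof.
move=> hc; elim: l => //= e l IH hsub.
rewrite -/(cat l l') (Pl_cons p e (l ++ l')) IH; last by move=> e' h; apply: hsub; right.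
rewrite -Pl_cons; apply: (Pdup Hproj) => //; apply: hsub; by left.
Qed.

Lemma Pl0 (R : realType) (H : completeNormedModType R[i]) (ip : H -> H -> R[i])
  (S : Type) (G : S -> finType) (p : forall t, G t -> H -> H)
  (Hproj : forall t a, is_projection ip (p t a)) l : Pl p l 0 = 0.
Proof. by elim: l => //= e l IH; rewrite Pl_cons IH /opE (proj0 (Hproj _ _)). Qed.

Lemma Pnull (R : realType) (H : completeNormedModType R[i]) (ip : H -> H -> R[i])
  (S : Type) (G : S -> finType) (p : forall t, G t -> H -> H)
  (Hproj : forall t a, is_projection ip (p t a)) (phi : H) l l' :
  commuting_set p phi -> (forall e, List.In e l -> List.In e l') ->
  Pl p l phi = 0 -> Pl p l' phi = 0.
Proof.
move=> hc hsub h0.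
rewrite -(Psub Hproj hc hsub) (Pperm hc (_ : Permutation _ (l' ++ l))); last first.
  by rewrite !catE; apply: Permutation_app_comm.
by rewrite Pl_cat h0 (Pl0 Hproj).
Qed.

Lemma projB (R : realType) (H : completeNormedModType R[i]) (ip : H -> H -> R[i])
  (f : H -> H) : is_projection ip f -> forall x y, f (x - y) = f x - f y.
Proof.
move=> hf x y; have := proj_lin hf 1 x (- y); rewrite !scale1r => ->.
have := proj_lin hf (-1) y 0; rewrite addr0 (proj0 hf) addr0 !scaleN1r => ->.
by [].
Qed.

Lemma meet_eval (R : realType) (H : completeNormedModType R[i]) (ip : H -> H -> R[i])
  (Hip : is_inner_product ip) (S : Type) (G : S -> finType) (p : forall t, G t -> H -> H)
  (Hproj : forall t a, is_projection ip (p t a)) (phi : H) l q :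
  commuting_set p phi -> is_meet ip (map (opE p) l) q -> q phi = Pl p l phi.
Proof.
move=> hc [hq hrange].
have qf : forall f, List.In f (map (opE p) l) -> forall x, q (f x) = q x.
  move=> f hf x; have [e [fE _]] := in_map' hf.
  have hpf : is_projection ip f by rewrite fE; exact: Hproj.
  have fq : forall y, f (q y) = q y.
    move=> y; have : op_range q (q y) by exists y.
    rewrite hrange => /(_ f hf); exact: (range_proj hpf _).1.
  apply/eqP; rewrite -subr_eq0 -(projB hq); apply/eqP.
  apply: (ipxx0 Hip).
  rewrite (proj_sa hq) (proj_idem hq) -[in X in ip _ X]fq -(proj_sa hpf).
  by rewrite (projB hpf) (proj_idem hpf) subrr ip0.
have qP : forall ws, (forall f, List.In f ws -> List.In f (map (opE p) l)) ->
    forall x, q (op_prod ws x) = q x.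
  elim=> //= g ws IH hws x.
  rewrite (qf g (hws g (or_introl erefl))) IH // => g' h; apply: hws; right; exact: h.
have inr : op_range q (Pl p l phi).
  rewrite hrange => f hf; have [e [fE he]] := in_map' hf.
  exists (Pl p l phi); rewrite fE -Pl_cons.
  by rewrite (Pdup Hproj hc he).
rewrite -(qP (map (opE p) l) (fun f h => h) phi).
exact: (range_proj hq _).1.
Qed.

Lemma in_filter' (T : Type) (P : T -> bool) (l : seq T) (x : T) :
  List.In x (seq.filter P l) <-> List.In x l /\ P x.
Proof.
elim: l => //= [|y l IH]; first by split => // -[].
case hy: (P y) => /=; split.
- by case=> [<-|/IH [h1 h2]]; split => //; [left|right].
- by case=> [[<-|h] hx]; [left|right; apply/IH].
- by move=> /IH [h1 h2]; split => //; right.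
- case=> [[ey|h] hx]; last by apply/IH.
  by move: hx; rewrite -ey hy.
Qed.

Lemma In_mem (T : eqType) (x : T) (s : seq T) : x \in s -> List.In x s.
Proof. elim: s => //= y s IH; rewrite in_cons => /orP[/eqP ->|/IH]; [by left|by right]. Qed.

Lemma X0_list (S : Type) (G : S -> finType) (omega : forall t, G t) (l : seq {t : S & G t}) :
  (forall e, List.In e l -> projT2 e = omega (projT1 e)) ->
  l = map (fun t => existT (fun t => G t) t (omega t)) (map (fun e => projT1 e) l).
Proof.
elim: l => //= e l IH h; rewrite -IH; last by move=> e' he'; apply: h; right.
by case: e h => t a /= h; rewrite -(h (existT _ t a)) //; left.
Qed.

Definition functional_set (S : Type) (G : S -> finType) (X : set {t : S & G t}) :=
  forall t a b, X (existT _ t a) -> X (existT _ t b) -> a = b.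

Lemma key (R : realType) (H : completeNormedModType R[i]) (ip : H -> H -> R[i])
  (Hip : is_inner_product ip) (S : Type) (G : S -> finType) (p : forall t, G t -> H -> H)
  (Hproj : forall t a, is_projection ip (p t a))
  (Hsum : forall t (x : H), \sum_(a : G t) p t a x = x)
  (D : set S) (A : set (forall t, G t)) (HA : determined D A)
  (phi : H) (hc : commuting_set p phi) (hF : F_set ip p setT A phi)
  (omega : forall t, G t) (hA : A omega) :
  exists ts : seq S, (forall t, List.In t ts -> D t) /\
    Pl p (map (fun t => existT (fun t => G t) t (omega t)) ts) phi = 0.
Proof.
apply: contrapT => Hno.
pose E := {t : S & G t}.
pose X0 : set E := fun e => D (projT1 e) /\ projT2 e = omega (projT1 e).
pose good (X : set E) := functional_set X /\
  (forall l, (forall e, List.In e l -> X e) -> Pl p l phi <> 0).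
have goodX0 : good X0.
  split; first by move=> t a b [_ ha] [_ hb]; rewrite /= in ha hb; rewrite ha hb.
  move=> l hl h0; apply: Hno; exists (map (fun e => projT1 e) l); split.
    by move=> t ht; have [e [te he]] := in_map' ht; rewrite te; exact: (hl e he).1.
  by rewrite -X0_list // => e he; exact: (hl e he).2.
pose P (X : set E) := good (X0 `|` X).
have [A0 [PA0 maxA0]] : exists A0, P A0 /\ forall B, A0 `<` B -> ~ P B.
  apply: Zorn_bigcup => F FP Ftot.
  have hl : forall l, (forall e, List.In e l -> (X0 `|` \bigcup_(X in F) X) e) ->
      (forall e, List.In e l -> X0 e) \/
      exists2 Y, F Y & forall e, List.In e l -> (X0 `|` Y) e.
    elim=> [|e l IH] hsub; first by left.
    have [he|[Y FY hY]] : X0 e \/ exists2 Y, F Y & Y e.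
      by case: (hsub e (or_introl erefl)) => [h|[Y FY hY]]; [left|right; exists Y].
    - case: (IH (fun e' h => hsub e' (or_intror h))) => [h|[Y FY hY]].
        by left => e' [<-|h']; [exact: he|exact: h].
      by right; exists Y => // e' [<-|h']; [left|exact: hY].
    - case: (IH (fun e' h => hsub e' (or_intror h))) => [h|[Y' FY' hY']].
        by right; exists Y => // e' [<-|h']; [right|left; exact: h].
      case: (Ftot _ _ FY FY') => hYY'.
        by right; exists Y' => // e' [<-|h']; [right; exact: hYY'|exact: hY'].
      right; exists Y => // e' [<-|h']; first by right.
      by case: (hY' e' h') => [h''|h'']; [left|right; exact: hYY'].
  split.
    move=> t a b ha hb.
    have := hl [:: existT _ t a; existT _ t b].
    case.
    - by move=> e /= [<-|[<-|[]]].
    - move=> h; apply: goodX0.1; first by apply: h; left.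
      by apply: h; right; left.
    - case=> Y FY h; apply: (FP Y FY).1; first by apply: h; left.
      by apply: h; right; left.
  move=> l hsub; case: (hl l hsub) => [h|[Y FY h]].
    exact: goodX0.2.
  exact: (FP Y FY).2.
pose AA := X0 `|` A0.
have hex : forall t, exists a, AA (existT _ t a).
  move=> t; apply: contrapT => hnot.
  have hnull : forall a, exists l, (forall e, List.In e l -> AA e \/ e = existT _ t a) /\ Pl p l phi = 0.
    move=> a; pose B := A0 `|` [set existT (fun t => G t) t a].
    have hAB : A0 `<` B.
      split; first by move=> e h; left.
      by move=> hBA; apply: hnot; exists a; right; apply: hBA; right.
    have nPB := maxA0 B hAB.
    have cv : forall e, (X0 `|` B) e -> AA e \/ e = existT _ t a.
      by move=> e [h|[h|h]]; [left; left|left; right|right].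
    apply: contrapT => hno2; apply: nPB; split.
      move=> t' a' b' /cv ha /cv hb.
      case: ha => [ha|ea]; case: hb => [hb|eb].
      - exact: PA0.1 t' a' b' ha hb.
      - have tt : t' = t := congr1 (fun e => projT1 e) eb.
        subst t'; have eb' := inj_pair2 _ _ _ _ _ eb; subst b'.
        by exfalso; apply: hnot; exists a'.
      - have tt : t' = t := congr1 (fun e => projT1 e) ea.
        subst t'; have ea' := inj_pair2 _ _ _ _ _ ea; subst a'.
        by exfalso; apply: hnot; exists b'.
      - have tt : t' = t := congr1 (fun e => projT1 e) ea.
        subst t'; have ea' := inj_pair2 _ _ _ _ _ ea; have eb' := inj_pair2 _ _ _ _ _ eb.
        by rewrite ea' eb'.
    move=> l hl h0; apply: hno2; exists l; split => // e he.
    exact: cv (hl e he).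
  have hL : forall s : seq (G t), exists L, (forall e, List.In e L -> AA e) /\ forall a, List.In a s -> Pl p (existT _ t a :: L) phi = 0.
    elim=> [|a s [L [hL1 hL2]]]; first by exists [::].
    have [la [hla1 hla2]] := hnull a.
    exists (L ++ seq.filter (fun e => `[< AA e >]) la); split.
      move=> e; rewrite catE => he; case: (List.in_app_or _ _ _ he) => [h|h]; first exact: hL1.
      have [_ h'] := (in_filter' _ _ _).1 h.
      exact/asboolP.
    move=> b [<-|hb].
      apply: (Pnull Hproj hc _ hla2) => e he.
      case: (hla1 e he) => [hAe|->]; last by left.
      right; rewrite catE; apply: List.in_or_app; right; apply/in_filter'; split => //.
      exact/asboolP.
    apply: (Pnull Hproj hc _ (hL2 b hb)) => e [<-|he]; first by left.
    by right; rewrite catE; apply: List.in_or_app; left.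
  have [L [hL1 hL2]] := hL (enum (G t)).
  apply: (PA0.2 L hL1).
  rewrite -(Hsum t (Pl p L phi)); apply: big1 => a _.
  apply: (hL2 a); apply: In_mem; by rewrite mem_enum.
pose omega' := fun t => proj1_sig (cid (hex t)).
have ho' : forall t, AA (existT _ t (omega' t)) := fun t => proj2_sig (cid (hex t)).
have agree : forall t, D t -> omega t = omega' t.
  by move=> t Dt; apply: PA0.1 (ho' t); left.
have hA' : A omega' := (HA omega omega' agree).1 hA.
have [ts [_ [q [hq hq0]]]] := hF omega' hA'.
pose l := map (fun t => existT (fun t => G t) t (omega' t)) ts.
apply: (PA0.2 l).
  move=> e he; have [t [et _]] := in_map' he; rewrite et; exact: ho'.
rewrite -(meet_eval Hip Hproj hc (l:=l) (q:=q)) //.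
by rewrite /l -map_comp.
Qed.

Unset Implicit Arguments.

Theorem theorem4 (R : realType) (H : completeNormedModType R[i])
  (ip : H -> H -> R[i]) (S : Type) (G : S -> finType)
  (p : forall t, G t -> H -> H)
  (Hip : is_inner_product ip)
  (Hproj : forall t a, is_projection ip (p t a))
  (Hsum : forall t (x : H), \sum_(a : G t) p t a x = x)
  (D : set S) (A : set (forall t, G t))
  (HA : determined D A) :
  F_set ip p setT A `&` commuting_set p = F_set ip p D A `&` commuting_set p.
Proof.
apply/seteqP; split => phi [hF hc]; split => //.
  move=> omega hA.
  have [ts [hD h0]] := key Hip Hproj Hsum HA hc hF hA.
  have [q hq] : exists q, is_meet ip (map (fun t => p t (omega t)) ts) q.
    apply: (meet_exists Hip) => f hf.
    have [t [-> _]] := in_map' hf; exact: Hproj.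
  exists ts; split => //; exists q; split => //.
  rewrite (meet_eval Hip Hproj hc (l := map (fun t => existT (fun t => G t) t (omega t)) ts) (q := q)) //.
  by rewrite -map_comp.
move=> omega hA; have [ts [hD [q hq]]] := hF omega hA.
by exists ts; split => //; exists q.
Qed.
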